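(* Let $(X,\nu)$ be a $\sigma$-finite measure space, let $\omega:X\to(0,\infty)$ be a measurable function, and let $1<q_0\le p_0<\infty$ with $\frac1{p_0}+\frac1{q_0}=1$. Then for every $f\in L^1(X,\nu)\cap L^{q_0}(X,\omega^{1/p_0})$ with $\|f\|_1=1$, the map \[ [p_0,\infty)\to\mathbb{R},\qquad p\mapsto -p\log\|f\|_{q,\omega^{1/p}}, \] where $q$ is given by $\frac1p+\frac1q=1$, is increasing. Equivalently, the map $(1,q_0]\to\mathbb{R}$, $q\mapsto -p\log\|f\|_{q,\omega^{1/p}}$ is decreasing.
   Context: For a measurable $\omega:X\to(0,\infty)$ and $1\le p<\infty$, the weighted space $L^p(X,\omega)$ consists of measurable $f:X\to\mathbb{C}$ with $\|f\|_{p,\omega}=\big(\int_X|f|^p\omega^p\,d\nu\big)^{1/p}<\infty$. Thus $\|f\|_{q,\omega^{1/p}}=\big(\int_X|f|^q\omega^{q/p}\,d\nu\big)^{1/q}$, and $\|f\|_1=\int_X|f|\,d\nu$. *)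

(* Defs.v *)
From HB Require Import structures.
From mathcomp Require Import all_boot all_order all_algebra.
From mathcomp Require Import all_classical all_reals all_analysis.
From mathcomp Require Import complex.
Set Implicit Arguments. Unset Strict Implicit. Unset Printing Implicit Defensive.
Import Order.TTheory GRing.Theory Num.Theory.
Local Open Scope ring_scope.

(* Complex-valued functions are modelled as T -> R[i] (mathcomp-real-closed's
   complex numbers); |z| is [ComplexField.Normc.normc z] = sqrt (Re z ^ 2 + Im z ^ 2). *)

Definition cmeasurable d (T : measurableType d) (R : realType)
  (f : T -> R[i]) : Prop :=
  measurable_fun setT (fun x => complex.Re (f x)) /\
  measurable_fun setT (fun x => complex.Im (f x)).

Definition wnorm d (T : measurableType d) (R : realType)
  (mu : {measure set T -> \bar R}) (p : R) (w : T -> R) (f : T -> R[i])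
  : \bar R :=
  Lnorm mu p%:E (fun x => (ComplexField.Normc.normc (f x) * w x)%:E).

(* Main.v *)
Require Import Defs.
From HB Require Import structures.
From mathcomp Require Import all_boot all_order all_algebra.
From mathcomp Require Import all_classical all_reals all_analysis.
From mathcomp Require Import complex.
From mathcomp Require Import ring lra measurable_realfun.
Import Order.TTheory GRing.Theory Num.Theory.
Local Open Scope ring_scope.

Section S.
Variable R : realType.
Definition kk (p a w : R) := (a * w `^ p^-1) `^ ((1 - p^-1)^-1).

Lemma kk_split (pa pb a w : R) : 0 <= a -> 0 < w -> 1 < pa -> pa <= pb ->
  kk pb a w = a `^ (1 - (pa - 1) / (pb - 1)) * (kk pa a w) `^ ((pa - 1) / (pb - 1)).
Proof.
move=> a0 w0 pa1 pab.
have pb1 : 1 < pb by lra.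
have qpos : forall p : R, 1 < p -> 0 < (1 - p^-1)^-1.
  move=> p p1; rewrite invr_gt0 subr_gt0 invf_lt1 //; lra.
have tpos : 0 < (pa - 1) / (pb - 1) by apply: divr_gt0; lra.
have [->|apos] := eqVneq a 0.
  have q1 := qpos _ pa1; have q2 := qpos _ pb1.
  rewrite /kk !mul0r (powR0 (lt0r_neq0 q1)) (powR0 (lt0r_neq0 q2)) (powR0 (lt0r_neq0 tpos)).
  by rewrite mulr0.
have {}apos : 0 < a by rewrite lt_def apos.
have wpos : forall p : R, 0 < w `^ p by move=> p; rewrite powR_gt0.
apply: ln_inj.
- by rewrite posrE /kk powR_gt0 // mulr_gt0.
- by rewrite posrE mulr_gt0 // powR_gt0 // /kk powR_gt0 // mulr_gt0.
rewrite lnM ?posrE ?powR_gt0 ?mulr_gt0 //.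
rewrite /kk !ln_powR !lnM ?posrE ?powR_gt0 // !ln_powR.
have h1 : pa != 0 by rewrite gt_eqF //; lra.
have h2 : pb != 0 by rewrite gt_eqF //; lra.
have h3 : pa - 1 != 0 by rewrite gt_eqF //; lra.
have h4 : pb - 1 != 0 by rewrite gt_eqF //; lra.
field; rewrite ?h1 ?h2 ?h3 ?h4 //.
Qed.
End S.
Arguments kk {R}.
Arguments kk_split {R}.

Lemma final_alg (R : realType) (j1 j2 p1 p2 : R) : 0 < j1 -> 0 < j2 -> 1 < p1 -> p1 <= p2 ->
  j2 <= j1 `^ ((p1 - 1) / (p2 - 1)) ->
  - p1 * ln (j1 `^ (1 - p1^-1)) <= - p2 * ln (j2 `^ (1 - p2^-1)).
Proof.
move=> j10 j20 p11 p12 H.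
rewrite !ln_powR.
have L : ln j2 <= (p1 - 1) / (p2 - 1) * ln j1.
  by rewrite -ln_powR ler_ln // posrE powR_gt0.
have hp2 : 0 < p2 - 1 by lra.
have L2 : (p2 - 1) * ln j2 <= (p1 - 1) * ln j1.
  rewrite -(ler_pM2l hp2) in L.
  by move: L; rewrite mulrA mulrCA divff ?mulr1 // gt_eqF.
have e : forall p L : R, p != 0 -> - p * ((1 - p^-1) * L) = - ((p - 1) * L).
  by move=> p L' hp; field.
rewrite !e ?gt_eqF //; try lra.
Qed.

Section Int.
Context d (T : measurableType d) (R : realType).
Variable mu : {measure set T -> \bar R}.
Local Open Scope ereal_scope.

Lemma Lnorm_pow (h : T -> R) (s : R) : (forall x, 0 <= h x)%R -> s != 0%R ->
  Lnorm mu s%:E (EFin \o (fun x => h x `^ s^-1)%R) = (\int[mu]_x (h x)%:E) `^ s^-1.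
Proof.
move=> h0 s0; rewrite unlock /=; congr (_ `^ _); apply: eq_integral => x _.
rewrite /= ger0_norm ?powR_ge0 // -powRrM mulVf // powRr1 //.
Qed.

Lemma mpow (h : T -> R) (p : R) : measurable_fun setT h ->
  measurable_fun setT (fun x => h x `^ p)%R.
Proof. exact: (@measurableT_comp _ _ _ _ _ _ (@powR R ^~ p)). Qed.

Lemma meas_kk (p : R) (g w : T -> R) : measurable_fun setT g -> measurable_fun setT w ->
  measurable_fun setT (fun x => kk p (g x) (w x)).
Proof.
move=> mg mw; rewrite /kk.
apply: mpow; apply: measurable_funM => //; exact: mpow.
Qed.

Lemma holder_step (g w : T -> R) (pa pb : R) :
  measurable_fun setT g -> measurable_fun setT w ->
  (forall x, 0 <= g x)%R -> (forall x, 0 < w x)%R ->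
  \int[mu]_x (g x)%:E = 1 -> (1 < pa)%R -> (pa <= pb)%R ->
  \int[mu]_x (kk pb (g x) (w x))%:E <=
    (\int[mu]_x (kk pa (g x) (w x))%:E) `^ ((pa - 1) / (pb - 1)).
Proof.
move=> mg mw g0 w0 g1 pa1 pab.
have kk0 : forall p x, (0 <= kk p (g x) (w x))%R by move=> p x; exact: powR_ge0.
have [<-|papb] := eqVneq pa pb.
  rewrite divff ?poweRe1 //; last by rewrite subr_eq0 gt_eqF.
  by apply: integral_ge0 => x _; rewrite lee_fin.
set t := ((pa - 1) / (pb - 1))%R.
have pb1 : (1 < pb)%R by lra.
have pab' : (pa < pb)%R by rewrite lt_def eq_sym papb.
have t0 : (0 < t)%R by apply: divr_gt0; lra.
have t1 : (t < 1)%R by rewrite /t ltr_pdivrMr; lra.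
pose P := (1 - t)^-1%R; pose Q := t^-1%R.
have P0 : (0 < P)%R by rewrite invr_gt0; lra.
have Q0 : (0 < Q)%R by rewrite invr_gt0.
have PQ : (P^-1 + Q^-1 = 1)%R by rewrite !invrK; ring.
have mf1 : measurable_fun setT (fun x => g x `^ P^-1)%R.
  exact: mpow.
have mf2 : measurable_fun setT (fun x => kk pa (g x) (w x) `^ Q^-1)%R.
  by apply: mpow; exact: meas_kk.
have := @hoelder _ _ _ mu _ _ P Q mf1 mf2 P0 Q0 PQ.
rewrite Lnorm_pow // ?gt_eqF // Lnorm_pow // ?gt_eqF // g1 poweR1r mul1e.
rewrite /Q invrK Lnorm1 => H; apply: le_trans H; rewrite le_eqVlt; apply/orP; left.
apply/eqP; apply: eq_integral => x _ /=.
by rewrite ger0_norm ?mulr_ge0 ?powR_ge0 // /P invrK -kk_split.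
Qed.
Lemma LnE (h : T -> R) (s : R) :
  Lnorm mu s%:E (fun x => (h x)%:E) = (\int[mu]_x (`|h x| `^ s)%:E) `^ s^-1.
Proof. by rewrite unlock /=. Qed.

Lemma J_pos (g w : T -> R) (p : R) :
  measurable_fun setT g -> measurable_fun setT w ->
  (forall x, 0 <= g x)%R -> (forall x, 0 < w x)%R ->
  \int[mu]_x (g x)%:E = 1 -> (1 < p)%R ->
  0 < \int[mu]_x (kk p (g x) (w x))%:E.
Proof.
move=> mg mw g0 w0 g1 p1.
rewrite lt0e integral_ge0 ?andbT; last by move=> x _; rewrite lee_fin powR_ge0.
apply/eqP => J0.
have mF : measurable_fun setT (fun x => (kk p (g x) (w x))%:E).
  by apply/measurable_EFinP; exact: meas_kk.
have : \int[mu]_(x in setT) `|(kk p (g x) (w x))%:E| = 0.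
  rewrite -J0; apply: eq_integral => x _.
  by rewrite abse_EFin ger0_norm ?powR_ge0.
move/(ae_eq_integral_abs mu measurableT mF) => H.
have H2 : ae_eq mu setT (fun x => (g x)%:E) (cst 0).
  apply: filterS H => x /= Hx Tx.
  have := Hx Tx; rewrite /kk => /eqP; rewrite eqe => /eqP /powR_eq0_eq0 /eqP.
  rewrite mulf_eq0 => /orP [/eqP -> //|].
  by rewrite gt_eqF // powR_gt0.
have mG : measurable_fun setT (fun x => (g x)%:E) by apply/measurable_EFinP.
have := @ae_eq_integral _ _ _ mu setT (cst 0) _ measurableT mG (measurable_cst _) H2.
by rewrite integral0 g1 => /eqP; rewrite onee_eq0.
Qed.
End Int.
Arguments LnE {d T R}.
Arguments holder_step {d T R}.
Arguments J_pos {d T R}.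
Arguments mpow {d T R}.

Theorem proposition2p1 (d : measure_display) (X : measurableType d)
  (R : realType) (nu : {measure set X -> \bar R})
  (omega : X -> R) (p0 q0 : R) (f : X -> R[i]) :
  sigma_finite setT nu ->
  measurable_fun setT omega -> (forall x, 0 < omega x) ->
  1 < q0 -> q0 <= p0 -> p0^-1 + q0^-1 = 1 ->
  cmeasurable f ->
  (wnorm nu 1%R (fun=> 1%R) f < +oo)%E ->
  (wnorm nu q0 (fun x => (omega x `^ p0^-1)%R) f < +oo)%E ->
  wnorm nu 1%R (fun=> 1%R) f = 1%E ->
  forall p1 p2 : R, p0 <= p1 -> p1 <= p2 ->
    let q1 := (1 - p1^-1)^-1 in
    let q2 := (1 - p2^-1)^-1 in
    - p1 * ln (fine (wnorm nu q1 (fun x => omega x `^ p1^-1) f))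
    <= - p2 * ln (fine (wnorm nu q2 (fun x => omega x `^ p2^-1) f)).
Proof.
move=> _ mom om0 q01 q0p0 pq [mre mim] _ fin0 n1 p1 p2 p01 p12 /=.
pose g := fun x => ComplexField.Normc.normc (f x).
have gE : g = fun x => ((complex.Re (f x)) * (complex.Re (f x)) +
                       (complex.Im (f x)) * (complex.Im (f x))) `^ 2^-1.
  apply/funext => x; rewrite /g; case: (f x) => a b /=.
  rewrite powR12_sqrt ?addr_ge0 -?expr2 ?sqr_ge0 //.
have g0 : forall x, 0 <= g x.
  by move=> x; rewrite /g; case: (f x) => a b /=; exact: sqrtr_ge0.
have mg : measurable_fun setT g.
  rewrite gE; apply: mpow; apply: measurable_funD; exact: measurable_funM.
have g1 : (\int[nu]_x (g x)%:E = 1)%E.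
  rewrite -n1 /wnorm Lnorm1; apply: eq_integral => x _.
  by rewrite abse_EFin mulr1 ger0_norm //; exact: g0.
have p0gt1 : 1 < p0 by lra.
have p1gt1 : 1 < p1 by lra.
have p2gt1 : 1 < p2 by lra.
have eq0 : q0 = (1 - p0^-1)^-1 by rewrite -pq addrC addKr invrK.
pose J p := (\int[nu]_x (kk p (g x) (omega x))%:E)%E.
have wE : forall p, 1 < p -> wnorm nu ((1 - p^-1)^-1) (fun x => omega x `^ p^-1) f
                              = (J p `^ (1 - p^-1))%E.
  move=> p p1'; rewrite /wnorm (LnE nu (fun x => g x * omega x `^ p^-1)) invrK.
  congr (_ `^ _)%E; apply: eq_integral => x _.
  by rewrite /kk ger0_norm // mulr_ge0 // powR_ge0.
have sub_ne0 : forall p : R, 1 < p -> 1 - p^-1 != 0.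
  by move=> p pp; rewrite subr_eq0 eq_sym invr_eq1 gt_eqF.
have J0fin : (J p0 < +oo)%E.
  move: fin0; rewrite eq0 wE //; apply: lty_poweRy; exact: sub_ne0.
have J1le := holder_step nu _ _ _ _ mg mom g0 om0 g1 p0gt1 p01.
have J2le : (J p2 <= J p1 `^ ((p1 - 1) / (p2 - 1)))%E := holder_step nu _ _ _ _ mg mom g0 om0 g1 p1gt1 p12.
have J1fin : (J p1 < +oo)%E.
  by apply: le_lt_trans J1le _; apply: poweR_lty.
have J2fin : (J p2 < +oo)%E.
  by apply: le_lt_trans J2le _; apply: poweR_lty.
have J1pos : (0 < J p1)%E := J_pos nu _ _ _ mg mom g0 om0 g1 p1gt1.
have J2pos : (0 < J p2)%E := J_pos nu _ _ _ mg mom g0 om0 g1 p2gt1.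
rewrite !wE //.
move: J1pos J1fin J2pos J2fin J2le; move: (J p1) (J p2) => A B A0 Afin B0 Bfin BA.
rewrite (fine_poweR A) (fine_poweR B).
have f1 : A \is a fin_num by rewrite ge0_fin_numE ?Afin // ltW.
have f2 : B \is a fin_num by rewrite ge0_fin_numE ?Bfin // ltW.
apply: final_alg => //.
- by apply: fine_gt0; rewrite A0 Afin.
- by apply: fine_gt0; rewrite B0 Bfin.
- rewrite -fine_poweR; apply: fine_le => //; exact: fin_num_poweR.
Qed.
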